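(* Let $\mathcal{A}$ be a unital algebra over a field $F$ with $\operatorname{char}(F)\neq2$ such that $\mathcal{A}=R(\mathcal{A})$. Then $\operatorname{QJDer}(\mathcal{A})=\operatorname{Cent}(\mathcal{A})+\operatorname{JDer}(\mathcal{A})$.
   Context: $R(\mathcal{A})$ is the subalgebra of $\mathcal{A}$ generated by all idempotents of $\mathcal{A}$. $x\circ y=xy+yx$. $\operatorname{QJDer}(\mathcal{A})$: linear $f:\mathcal{A}\to\mathcal{A}$ for which there is a linear $h$ with $f(x)\circ y+x\circ f(y)=h(x\circ y)$ for all $x,y$. $\operatorname{Cent}(\mathcal{A})$: linear $f$ with $f(xy)=f(x)y=xf(y)$. $\operatorname{JDer}(\mathcal{A})$: linear $d$ with $d(x\circ y)=d(x)\circ y+x\circ d(y)$. Sums of sets of maps are sets of pointwise sums. *)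

(* Defs.v *)
From HB Require Import structures.
From mathcomp Require Import all_boot all_order all_algebra.
Set Implicit Arguments. Unset Strict Implicit. Unset Printing Implicit Defensive.
Import GRing.Theory.
Local Open Scope ring_scope.

Section Defs.
Variables (F : fieldType) (A : algType F).

Definition jprod (x y : A) : A := x * y + y * x.

Definition is_linear_map (f : A -> A) : Prop :=
  forall (a : F) (x y : A), f (a *: x + y) = a *: f x + f y.

(* R(A): the subalgebra of A generated by all idempotents of A *)
Inductive in_idem_gen : A -> Prop :=
  | idg_idem e : e * e = e -> in_idem_gen e
  | idg_zero : in_idem_gen 0
  | idg_add x y : in_idem_gen x -> in_idem_gen y -> in_idem_gen (x + y)
  | idg_scale (a : F) x : in_idem_gen x -> in_idem_gen (a *: x)
  | idg_mul x y : in_idem_gen x -> in_idem_gen y -> in_idem_gen (x * y).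

Definition generated_by_idempotents : Prop := forall x : A, in_idem_gen x.

Definition is_QJDer (f : A -> A) : Prop :=
  is_linear_map f /\
  exists h : A -> A, is_linear_map h /\
    forall x y, jprod (f x) y + jprod x (f y) = h (jprod x y).

Definition is_Cent (f : A -> A) : Prop :=
  is_linear_map f /\ forall x y, f (x * y) = f x * y /\ f (x * y) = x * f y.

Definition is_JDer (d : A -> A) : Prop :=
  is_linear_map d /\ forall x y, d (jprod x y) = jprod (d x) y + jprod x (d y).

End Defs.

(* Main.v *)
Require Import Defs.
From HB Require Import structures.
From mathcomp Require Import all_boot all_order all_algebra.
Import GRing.Theory.
Local Open Scope ring_scope.

Section Aux.
Variables (F : fieldType) (A : algType F).

Lemma idem_comm (e u a : A) : e * e = e ->
  (u * e + e * u) + (e * u + u * e) = (u + u) + (e * a + a * e) ->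
  a * e = e * a.
Proof.
move=> he E.
have s1 : forall x y : A, e * (x + y) * (1 - e) = e * x * (1 - e) + e * y * (1 - e).
  by move=> x y; rewrite [e * (x + y)]mulrDr [(e * x + e * y) * _]mulrDl.
have s2 : forall x y : A, (1 - e) * (x + y) * e = (1 - e) * x * e + (1 - e) * y * e.
  by move=> x y; rewrite [(1 - e) * (x + y)]mulrDr [(_ * x + _ * y) * e]mulrDl.
have ee0 : e * (1 - e) = 0 by rewrite mulrBr mulr1 he subrr.
have ee1 : (1 - e) * e = 0 by rewrite mulrBl mul1r he subrr.
have k1 : forall x : A, e * (x * e) * (1 - e) = 0.
  by move=> x; rewrite -!mulrA ee0 !mulr0.
have k2 : forall x : A, e * (e * x) * (1 - e) = e * x * (1 - e).
  by move=> x; rewrite mulrA he.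
have k3 : forall x : A, (1 - e) * (e * x) * e = 0.
  by move=> x; rewrite !mulrA ee1 !mul0r.
have k4 : forall x : A, (1 - e) * (x * e) * e = (1 - e) * x * e.
  by move=> x; rewrite -!mulrA he.
have E1 := congr1 (fun z => e * z * (1 - e)) E.
have E2 := congr1 (fun z => (1 - e) * z * e) E.
rewrite /= !s1 k1 k2 add0r addr0 in E1.
rewrite /= !s2 k3 k4 add0r addr0 in E2.
rewrite k1 k2 addr0 -{1}[_ + _ in LHS]addr0 in E1; move/addrI: E1 => E1.
rewrite k3 k4 add0r -{1}[_ + _ in LHS]addr0 in E2; move/addrI: E2 => E2.
have h1 : e * a = e * a * e.
  by apply/eqP; rewrite -subr_eq0 -{1}[e * a]mulr1 -mulrBr E1.
have h2 : a * e = e * a * e.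
  by apply/eqP; rewrite -subr_eq0 -mulrA -[a * e in X in X - _]mul1r -mulrBl mulrA E2.
by rewrite h1 h2.
Qed.

Lemma lin_add (f : A -> A) : is_linear_map f -> forall x y, f (x + y) = f x + f y.
Proof. by move=> hf x y; rewrite -[x in LHS]scale1r hf scale1r. Qed.

Lemma jprodDl (x y z : A) : jprod (x + y) z = jprod x z + jprod y z.
Proof. by rewrite /jprod mulrDl mulrDr addrACA. Qed.
Lemma jprodDr (x y z : A) : jprod z (x + y) = jprod z x + jprod z y.
Proof. by rewrite /jprod mulrDl mulrDr addrACA. Qed.
Lemma jprodNl (x z : A) : jprod (- x) z = - jprod x z.
Proof. by rewrite /jprod mulNr mulrN opprD. Qed.
Lemma jprodNr (x z : A) : jprod z (- x) = - jprod z x.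
Proof. by rewrite /jprod mulNr mulrN opprD. Qed.

Lemma central_gen (a : A) : (forall e : A, e * e = e -> a * e = e * a) ->
  forall x, in_idem_gen x -> a * x = x * a.
Proof.
move=> he x; elim=> {x}.
- by move=> e /he.
- by rewrite mulr0 mul0r.
- by move=> x y _ hx _ hy; rewrite mulrDr mulrDl hx hy.
- by move=> k x _ hx; rewrite -scalerAr -scalerAl hx.
- by move=> x y _ hx _ hy; rewrite mulrA hx -mulrA hy mulrA.
Qed.
End Aux.

Theorem proposition4p2 (F : fieldType) (A : algType F)
  (hchar : (2 : F) != 0) (hR : generated_by_idempotents A) :
  forall f : A -> A,
    is_QJDer f <->
    exists c d : A -> A, is_Cent c /\ is_JDer d /\ forall x, f x = c x + d x.
Proof.
move=> f; split.
- move=> [hf [h [hh H]]].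
  set a := f 1.
  have ac : forall x, a * x = x * a.
    move=> x; apply: central_gen (hR x) => e he.
    apply: (@idem_comm F A e (f e) a he).
    have H1 := H e e; have H2 := H e 1.
    rewrite /jprod he in H1; rewrite /jprod !mulr1 !mul1r in H2.
    by rewrite H1 -H2.
  have hx : forall x, h x = f x + a * x.
    move=> x; have H2 := H x 1.
    rewrite /jprod !mulr1 !mul1r -/a (@lin_add _ _ _ hh) ac in H2.
    apply/eqP; rewrite -subr_eq0; apply/eqP.
    set v := _ - _.
    have : (2 : F) *: v = 0.
      rewrite scaler_nat /v mulr2n opprD addrA.
      rewrite -!ac in H2; rewrite [h x + _ + h x]addrAC -H2 -!opprD -addrA -opprD.
      by rewrite [in X in _ - X]addrACA subrr.
    by move/eqP; rewrite scaler_eq0 (negbTE hchar) /= => /eqP.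
  exists (fun x => a * x), (fun x => f x - a * x).
  split; [|split].
  + split.
      by move=> k x y; rewrite mulrDr -scalerAr.
    by move=> x y; rewrite mulrA; split=> //; rewrite ac -mulrA ac mulrA.
  + split.
      by move=> k x y; rewrite hf mulrDr -scalerAr scalerBr opprD addrACA.
    move=> x y.
    rewrite jprodDl jprodDr jprodNl jprodNr addrACA -opprD H hx.
    have -> : jprod (a * x) y + jprod x (a * y) = a * jprod x y + a * jprod x y.
      by rewrite /jprod !mulrDr !mulrA -[y * a]ac -[x * a]ac.
    by rewrite opprD addrA addrK.
  + by move=> x; rewrite addrC subrK.
- move=> [c [d [[hc Cc] [[hd Dd] fcd]]]].
  split.
    by move=> k x y; rewrite !fcd hc hd scalerDr addrACA.
  exists (fun x => c x + c x + d x); split.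
    move=> k x y; rewrite hc hd !scalerDr.
    by rewrite [X in X + _ = _]addrACA [LHS]addrACA.
  move=> x y; rewrite !fcd jprodDl jprodDr addrACA Dd.
  congr (_ + _).
  rewrite /jprod (@lin_add _ _ _ hc).
  rewrite -(Cc x y).1 -(Cc y x).2 -(Cc x y).2 -(Cc y x).1.
  by [].
Qed.
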